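(* Let $\mathbb{C}$ be a small category, let $\theta\colon\mathbb{D}\to\mathbb{C}$ be an $n$-ary partial operation with domain the full subcategory $i\colon\mathbb{D}\hookrightarrow\mathbb{C}^n$, and let $\theta_j\colon\mathbb{D}_j\to\mathbb{C}$ be $k_j$-ary partial operations with domains $\mathbb{D}_j\subseteq\mathbb{C}^{k_j}$ full, for $j=1,\dots,n$. Suppose that $(\theta_1,\dots,\theta_n)\colon\mathbb{D}_1\times\cdots\times\mathbb{D}_n\to\mathbb{C}^n$ factors through $\mathbb{D}$, say as $i\circ(\theta_1,\dots,\theta_n)'$, so that the partial composite $\theta\circ(\theta_1,\dots,\theta_n)$, defined as the partial operation $\theta\circ(\theta_1,\dots,\theta_n)'\colon\mathbb{D}_1\times\cdots\times\mathbb{D}_n\to\mathbb{C}$ with domain $\mathbb{D}_1\times\cdots\times\mathbb{D}_n\subseteq\mathbb{C}^{k_1+\cdots+k_n}$, exists. Then there is a canonical natural isomorphism \[(\theta\circ(\theta_1,\dots,\theta_n))_D\cong\theta_D\circ((\theta_1)_D,\dots,(\theta_n)_D)\] of functors $[\mathbb{C}\to\mathbf{Set}]^{k_1+\cdots+k_n}\to[\mathbb{C}\to\mathbf{Set}]$.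
   Context: An $n$-ary partial operation $\theta\colon\mathbb{C}^n\rightharpoondown\mathbb{C}$ is a functor $\theta\colon\mathbb{D}\to\mathbb{C}$ where $\mathbb{D}$ is a full subcategory of $\mathbb{C}^n$. The Day extension of a partial operation $\theta\colon\mathbb{D}\to\mathbb{C}$ is the total functor $\theta_D\colon[\mathbb{C}\to\mathbf{Set}]^n\to[\mathbb{C}\to\mathbf{Set}]$, \[\theta_D(F_1,\dots,F_n)(a)=\int^{\vec d\in\mathbb{D}}\int^{\vec c\in\mathbb{C}^n}\mathbb{C}(\theta(\vec d),a)\times\mathbb{C}^n(\vec c,\vec d)\times\prod_{i=1}^n F_i(c_i),\] functorial in the $F_i$ via the induced maps on coends. *)

(* Defs.v *)
From Stdlib Require Import Relations ClassicalEpsilon.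
From mathcomp Require Import ssreflect ssrfun ssrbool eqtype ssrnat fintype.

Set Implicit Arguments.
Unset Strict Implicit.
Unset Printing Implicit Defensive.

Record Cat := {
  ob  : Type;
  hom : ob -> ob -> Type;
  idm : forall a, hom a a;
  cmp : forall a b c, hom b c -> hom a b -> hom a c }.

Arguments hom {c} a b : rename.
Arguments idm {c} a : rename.
Arguments cmp {c a b c0} g f : rename.

Definition is_cat (C : Cat) : Prop :=
  (forall a b : ob C, forall f : hom a b, cmp (idm b) f = f) /\
  (forall a b : ob C, forall f : hom a b, cmp f (idm a) = f) /\
  (forall a b c d : ob C, forall (f : hom a b) (g : hom b c) (h : hom c d),
      cmp h (cmp g f) = cmp (cmp h g) f).

Definition PowCat (C : Cat) (I : Type) : Cat :=
  {| ob := I -> ob C;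
     hom := fun x y => forall i, hom (x i) (y i);
     idm := fun x i => idm (x i);
     cmp := fun x y z g f i => cmp (g i) (f i) |}.

Definition FullSub (C : Cat) (P : ob C -> Prop) : Cat :=
  {| ob := {x : ob C | P x};
     hom := fun x y => hom (proj1_sig x) (proj1_sig y);
     idm := fun x => idm (proj1_sig x);
     cmp := fun x y z g f => cmp g f |}.

Arguments FullSub : clear implicits.

Record Functor (C D : Cat) := {
  fo : ob C -> ob D;
  fm : forall a b, hom a b -> hom (fo a) (fo b) }.
Arguments fm {C D} f {a b} f0 : rename.

Definition is_functor (C D : Cat) (F : Functor C D) : Prop :=
  (forall a, fm F (idm a) = idm (fo F a)) /\
  (forall a b c (f : hom a b) (g : hom b c),
      fm F (cmp g f) = cmp (fm F g) (fm F f)).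

Definition compF (A B C : Cat) (G : Functor B C) (F : Functor A B) : Functor A C :=
  {| fo := fun a => fo G (fo F a);
     fm := fun a b h => fm G (fm F h) |}.

Record PartialOp (C : Cat) (I : Type) := {
  pdom : (I -> ob C) -> Prop;
  pop  : Functor (FullSub (PowCat C I) pdom) C }.

Definition is_partial_op (C : Cat) (I : Type) (th : PartialOp C I) : Prop :=
  is_functor (pop th).

Record Copsh (C : Cat) := {
  ps0 : ob C -> Type;
  ps1 : forall a b, hom a b -> ps0 a -> ps0 b }.
Arguments ps1 {C} c {a b} h x : rename.

Definition is_copsh (C : Cat) (F : Copsh C) : Prop :=
  (forall a (x : ps0 F a), ps1 F (idm a) x = x) /\
  (forall a b c (f : hom a b) (g : hom b c) x,
      ps1 F (cmp g f) x = ps1 F g (ps1 F f x)).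

Definition is_nat (C : Cat) (F G : Copsh C) (eta : forall a, ps0 F a -> ps0 G a) :=
  forall a b (f : hom a b) x, eta b (ps1 F f x) = ps1 G f (eta a x).

Definition quot (T : Type) (R : T -> T -> Prop) : Type :=
  {Q : T -> Prop | exists t, Q = clos_refl_sym_trans T R t}.

Definition qcls (T : Type) (R : T -> T -> Prop) (t : T) : quot R :=
  exist _ (clos_refl_sym_trans T R t) (ex_intro _ t (erefl _)).

Definition qrep (T : Type) (R : T -> T -> Prop) (q : quot R) : T :=
  proj1_sig (constructive_indefinite_description _ (proj2_sig q)).

(* the map induced on quotients by f (meaningful when f respects R, R') *)
Definition qlift (T T' : Type) (R : T -> T -> Prop) (R' : T' -> T' -> Prop)
  (f : T -> T') (q : quot R) : quot R' := qcls R' (f (qrep q)).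

Section Day.
Variables (C : Cat) (I : Type) (th : PartialOp C I).

Definition DomCat := FullSub (PowCat C I) (pdom th).

Definition day_carrier (F : I -> Copsh C) (a : ob C) : Type :=
  { d : ob DomCat & { c : I -> ob C &
     (hom (fo (pop th) d) a * @hom (PowCat C I) c (proj1_sig d)
       * (forall i, ps0 (F i) (c i)))%type } }.

Definition day_mk (F : I -> Copsh C) (a : ob C) (d : ob DomCat) (c : I -> ob C)
  (u : hom (fo (pop th) d) a) (v : @hom (PowCat C I) c (proj1_sig d))
  (x : forall i, ps0 (F i) (c i)) : day_carrier F a :=
  existT _ d (existT _ c (u, v, x)).

(* generating relations of the (iterated) coend: dinaturality in d in D and
   dinaturality in c in C^I *)
Inductive day_rel (F : I -> Copsh C) (a : ob C) :
    day_carrier F a -> day_carrier F a -> Prop :=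
| day_rel_D : forall (d d' : ob DomCat) (g : @hom DomCat d d') (c : I -> ob C)
    (u : hom (fo (pop th) d') a) (v : @hom (PowCat C I) c (proj1_sig d))
    (x : forall i, ps0 (F i) (c i)),
    day_rel (day_mk (cmp u (fm (pop th) g)) v x)
            (day_mk u (@cmp (PowCat C I) _ _ _ g v) x)
| day_rel_C : forall (d : ob DomCat) (c c' : I -> ob C)
    (h : @hom (PowCat C I) c c')
    (u : hom (fo (pop th) d) a) (v : @hom (PowCat C I) c' (proj1_sig d))
    (x : forall i, ps0 (F i) (c i)),
    day_rel (day_mk u v (fun i => ps1 (F i) (h i) (x i)))
            (day_mk u (@cmp (PowCat C I) _ _ _ v h) x).

Definition day0 (F : I -> Copsh C) (a : ob C) : Type := quot (@day_rel F a).

Definition day1 (F : I -> Copsh C) (a b : ob C) (f : hom a b) :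
    day0 F a -> day0 F b :=
  @qlift _ _ (@day_rel F a) (@day_rel F b) (fun t : day_carrier F a =>
           let '(existT d (existT c (u, v, x))) := t in
           @day_mk F b d c (cmp f u) v x).

Definition day_obj (F : I -> Copsh C) : Copsh C :=
  {| ps0 := day0 F; ps1 := @day1 F |}.

Definition day_map (F G : I -> Copsh C)
    (eta : forall i a, ps0 (F i) a -> ps0 (G i) a) (a : ob C) :
    day0 F a -> day0 G a :=
  @qlift _ _ (@day_rel F a) (@day_rel G a) (fun t : day_carrier F a =>
           let '(existT d (existT c (u, v, x))) := t in
           @day_mk G a d c u v (fun i => eta i (c i) (x i))).
End Day.

Section Compose.
Variables (C : Cat) (n : nat) (k : 'I_n -> nat)
  (th : PartialOp C 'I_n) (ths : forall j : 'I_n, PartialOp C 'I_(k j)).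

(* index set of C^{k_1 + ... + k_n}, as the disjoint union of the 'I_(k j) *)
Definition SumIdx := {j : 'I_n & 'I_(k j)}.

Definition blk (A : Type) (x : SumIdx -> A) (j : 'I_n) : 'I_(k j) -> A :=
  fun t => x (existT _ j t).
Arguments blk {A} x j _.

Definition prod_dom (x : SumIdx -> ob C) : Prop :=
  forall j, pdom (ths j) (blk x j).

Definition factors : Prop :=
  forall (x : SumIdx -> ob C) (hx : prod_dom x),
    pdom th (fun j => fo (pop (ths j)) (exist _ (blk x j) (hx j))).

Variable hfac : factors.

Definition ProdDomCat := FullSub (PowCat C SumIdx) prod_dom.
Definition ThDomCat := FullSub (PowCat C 'I_n) (pdom th).

Definition tuple_fo (x : ob ProdDomCat) : ob ThDomCat :=
  exist _ (fun j => fo (pop (ths j)) (exist _ (blk (proj1_sig x) j) (proj2_sig x j)))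
          (hfac (proj2_sig x)).

Definition tuple_fm (x y : ob ProdDomCat) (h : hom x y) :
    hom (tuple_fo x) (tuple_fo y) :=
  fun j => @fm _ _ (pop (ths j))
             (exist _ (blk (proj1_sig x) j) (proj2_sig x j))
             (exist _ (blk (proj1_sig y) j) (proj2_sig y j))
             (fun t => h (existT _ j t)).

Definition tuple_op : Functor ProdDomCat ThDomCat :=
  {| fo := tuple_fo; fm := tuple_fm |}.

Definition comp_op : PartialOp C SumIdx :=
  {| pdom := prod_dom; pop := compF (pop th) tuple_op |}.

Definition dayR0 (F : SumIdx -> Copsh C) (a : ob C) : Type :=
  day0 th (fun j => day_obj (ths j) (blk F j)) a.

Definition dayR1 (F : SumIdx -> Copsh C) (a b : ob C) (f : hom a b) :
    dayR0 F a -> dayR0 F b :=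
  @day1 C _ th (fun j => day_obj (ths j) (blk F j)) a b f.

Definition dayR_map (F G : SumIdx -> Copsh C)
    (eta : forall s a, ps0 (F s) a -> ps0 (G s) a) (a : ob C) :
    dayR0 F a -> dayR0 G a :=
  @day_map C _ th (fun j => day_obj (ths j) (blk F j))
                  (fun j => day_obj (ths j) (blk G j))
     (fun j => @day_map C _ (ths j) (blk F j) (blk G j)
                  (fun t => eta (existT _ j t))) a.
End Compose.

(* Main.v *)
Require Import Defs.
From mathcomp Require Import ssreflect ssrfun ssrbool eqtype ssrnat fintype bigop.
From Stdlib Require Import Relations ClassicalEpsilon FunctionalExtensionality PropExtensionality ProofIrrelevance.

Set Implicit Arguments.
Unset Strict Implicit.
Unset Printing Implicit Defensive.


Notation crst := clos_refl_sym_trans.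

Lemma sig_eq_pi A (P : A -> Prop) (x y : sig P) : proj1_sig x = proj1_sig y -> x = y.
Proof. case: x => x px; case: y => y py /= E; subst y; f_equal; apply proof_irrelevance. Qed.

Lemma qcls_eq T (R : T -> T -> Prop) t t' : crst T R t t' -> qcls R t = qcls R t'.
Proof.
move=> H; apply: sig_eq_pi => /=.
apply: functional_extensionality => z; apply: propositional_extensionality; split => Hz.
- exact: rst_trans (rst_sym _ _ _ _ H) Hz.
- exact: rst_trans H Hz.
Qed.

Lemma qrep_spec T (R : T -> T -> Prop) (q : quot R) : proj1_sig q = crst T R (qrep q).
Proof. rewrite /qrep; case: (constructive_indefinite_description _ _) => t Ht /=; exact Ht. Qed.

Lemma qcls_qrep T (R : T -> T -> Prop) (q : quot R) : qcls R (qrep q) = q.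
Proof. apply: sig_eq_pi => /=; by rewrite -qrep_spec. Qed.

Lemma qrep_qcls T (R : T -> T -> Prop) t : crst T R t (qrep (qcls R t)).
Proof.
have := qrep_spec (qcls R t) => /= E.
have H : crst T R (qrep (qcls R t)) (qrep (qcls R t)) by apply: rst_refl.
by rewrite -E in H.
Qed.

Lemma crst_map T T' (R : T -> T -> Prop) (R' : T' -> T' -> Prop) (f : T -> T') :
  (forall x y, R x y -> crst T' R' (f x) (f y)) ->
  forall x y, crst T R x y -> crst T' R' (f x) (f y).
Proof.
move=> H x y; elim => [x0 y0 /H //|x0|x0 y0 _ IH|x0 y0 z0 _ IH1 _ IH2].
- exact: rst_refl.
- exact: rst_sym.
- exact: rst_trans IH1 IH2.
Qed.

Lemma qlift_cls T T' (R : T -> T -> Prop) (R' : T' -> T' -> Prop) (f : T -> T') t :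
  (forall x y, R x y -> crst T' R' (f x) (f y)) ->
  qlift R' f (qcls R t) = qcls R' (f t).
Proof.
move=> H; rewrite /qlift; apply: qcls_eq; apply: rst_sym.
apply: crst_map H _ _ _; exact: qrep_qcls.
Qed.


Section DayGen.
Variables (C : Cat) (I : Type) (P : PartialOp C I).

Definition pD F a (t : day_carrier P F a) : ob (DomCat P) := projT1 t.
Definition pC F a (t : day_carrier P F a) : I -> ob C := projT1 (projT2 t).
Definition pU F a (t : day_carrier P F a) : hom (fo (pop P) (pD t)) a := (projT2 (projT2 t)).1.1.
Definition pV F a (t : day_carrier P F a) : @hom (PowCat C I) (pC t) (proj1_sig (pD t)) :=
  (projT2 (projT2 t)).1.2.
Definition pY F a (t : day_carrier P F a) : forall i, ps0 (F i) (pC t i) := (projT2 (projT2 t)).2.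

Lemma car_eta F a (t : day_carrier P F a) : t = day_mk (pU t) (pV t) (pY t).
Proof. by case: t => d [c [[u v] y]]. Qed.

Definition Zg F a (t1 t2 : day_carrier P F a) : Prop :=
  exists (g : @hom (DomCat P) (pD t1) (pD t2)) (h : @hom (PowCat C I) (pC t1) (pC t2)),
    pU t1 = cmp (pU t2) (fm (pop P) g) /\
    (forall i, cmp (g i) (pV t1 i) = cmp (pV t2 i) (h i)) /\
    (forall i, pY t2 i = ps1 (F i) (h i) (pY t1 i)).

Lemma Zg_crst F a (t1 t2 : day_carrier P F a) : Zg t1 t2 -> crst _ (@day_rel C I P F a) t1 t2.
Proof.
case: t1 => d1 [c1 [[u1 v1] y1]]; case: t2 => d2 [c2 [[u2 v2] y2]].
move=> [g [h [Hu [Hv Hy]]]].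
rewrite /pU /= in Hu; rewrite /pV /pD /pC /= in Hv; rewrite /pY /pC /= in Hy.
apply: (rst_trans _ _ _ (day_mk u2 (@cmp (PowCat C I) _ _ _ g v1) y1)).
- apply: rst_step; rewrite Hu; exact: (day_rel_D g).
- have Ev : (@cmp (PowCat C I) _ _ _ g v1) = (@cmp (PowCat C I) _ _ _ v2 h).
    by apply: functional_extensionality_dep => i; exact: Hv.
  have Ey : y2 = (fun i => ps1 (F i) (h i) (y1 i)).
    by apply: functional_extensionality_dep => i; exact: Hy.
  rewrite Ev Ey; apply: rst_sym; apply: rst_step; exact: day_rel_C.
Qed.

Definition Zs F a (t1 t2 : day_carrier P F a) := Zg t1 t2 \/ Zg t2 t1.

Variable (hC : is_cat C) (hP : is_partial_op P).

Lemma Zg_refl F a (hF : forall i, is_copsh (F i)) (t : day_carrier P F a) : Zg t t.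
Proof.
case: hC => hl [hr ha]; case: hP => hid hcmp.
exists (@idm (DomCat P) (pD t)); exists (@idm (PowCat C I) (pC t)); split; [|split].
- by rewrite hid hr.
- by move=> i /=; rewrite hl hr.
- by move=> i /=; rewrite (proj1 (hF i)).
Qed.

Lemma rel_Zs F a (hF : forall i, is_copsh (F i)) (t1 t2 : day_carrier P F a) :
  @day_rel C I P F a t1 t2 -> Zs t1 t2.
Proof.
case: hC => hl [hr ha]; case: hP => hid hcmp.
case => [d d' g c u v x|d c c' h u v x].
- left; exists g; exists (@idm (PowCat C I) c).
  rewrite /pU /pV /pY /pD /pC /=; split; [|split].
  all: try done.
  all: try (move=> i); try (by rewrite hr); try (by rewrite (proj1 (hF i))).
- right; exists (@idm (DomCat P) d); exists h.
  rewrite /pU /pV /pY /pD /pC /=; split; [|split].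
  all: try done.
  all: try (by rewrite hid hr); try (move=> i); try (by rewrite hl).
Qed.

Lemma crst_path F a (hF : forall i, is_copsh (F i)) (t1 t2 : day_carrier P F a) :
  crst _ (@day_rel C I P F a) t1 t2 ->
  exists pm : (nat -> day_carrier P F a) * nat,
    pm.1 0 = t1 /\ (forall i, pm.2 <= i -> pm.1 i = t2) /\ (forall i, Zs (pm.1 i) (pm.1 i.+1)).
Proof.
move=> H0; have H := clos_rst_rst1n _ _ _ _ H0; clear H0; elim: H => [x|x y z Hxy _ [[q m] [Hq0 [Hqm Hqs]]]].
- exists (fun _ => x, 0); split => //; split => // i; left; exact: Zg_refl.
- simpl in Hq0, Hqm, Hqs; exists (fun i => if i is i'.+1 then q i' else x, m.+1); split => //; split.
  + by case => [//|i] /= Hi; apply: Hqm.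
  + case => [|i] /=; last exact: Hqs.
    rewrite Hq0; case: Hxy => H; first exact: rel_Zs.
    by case: (rel_Zs hF H) => ?; [right|left].
Qed.

Definition postc F a b (f : hom a b) (t : day_carrier P F a) : day_carrier P F b :=
  day_mk (d := pD t) (c := pC t) (cmp f (pU t)) (pV t) (pY t).

Lemma day1_cls F a b (f : hom a b) (t : day_carrier P F a) :
  day1 f (qcls _ t) = qcls _ (postc f t).
Proof.
case: hC => hl [hr ha].
rewrite /day1 qlift_cls; first by case: t => d [c [[u v] y]].
move=> x y; case => [d d' g c u v x0|d c c' h u v x0] /=; apply: rst_step.
- rewrite ha; exact: day_rel_D.
- exact: day_rel_C.
Qed.

Definition mapc F G (eta : forall i a, ps0 (F i) a -> ps0 (G i) a) a (t : day_carrier P F a) :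
  day_carrier P G a :=
  day_mk (d := pD t) (c := pC t) (pU t) (pV t) (fun i => eta i _ (pY t i)).

Lemma day_map_cls F G (eta : forall i a, ps0 (F i) a -> ps0 (G i) a) a (t : day_carrier P F a) :
  (forall i, is_nat (eta i)) ->
  day_map eta (qcls _ t) = qcls _ (mapc eta t).
Proof.
move=> Heta.
rewrite /day_map qlift_cls; first by case: t => d [c [[u v] y]].
move=> x y; case => [d d' g c u v x0|d c c' h u v x0] /=; apply: rst_step.
- exact: day_rel_D.
- have -> : (fun i => eta i (c' i) (ps1 (F i) (h i) (x0 i))) =
            (fun i => ps1 (G i) (h i) (eta i (c i) (x0 i))).
    by apply: functional_extensionality_dep => i; rewrite Heta.
  exact: day_rel_C.
Qed.

End DayGen.

Lemma zig_mk (C : Cat) (I : Type) (P : PartialOp C I) F a d1 c1 u1 v1 y1 d2 c2 u2 v2 y2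
  (g : @hom (DomCat P) d1 d2) (h : @hom (PowCat C I) c1 c2) :
  u1 = cmp u2 (fm (pop P) g) -> (forall i, cmp (g i) (v1 i) = cmp (v2 i) (h i)) ->
  (forall i, y2 i = ps1 (F i) (h i) (y1 i)) ->
  crst _ (@day_rel C I P F a) (@day_mk C I P F a d1 c1 u1 v1 y1) (@day_mk C I P F a d2 c2 u2 v2 y2).
Proof. move=> Hu Hv Hy; apply: Zg_crst; exists g; exists h; split; [|split]; assumption. Qed.

Lemma Zg_mk (C : Cat) (I : Type) (P : PartialOp C I) F a d1 c1 u1 v1 y1 d2 c2 u2 v2 y2
  (g : @hom (DomCat P) d1 d2) (h : @hom (PowCat C I) c1 c2) :
  u1 = cmp u2 (fm (pop P) g) -> (forall i, cmp (g i) (v1 i) = cmp (v2 i) (h i)) ->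
  (forall i, y2 i = ps1 (F i) (h i) (y1 i)) ->
  Zg (@day_mk C I P F a d1 c1 u1 v1 y1) (@day_mk C I P F a d2 c2 u2 v2 y2).
Proof. move=> Hu Hv Hy; exists g; exists h; split; [|split]; assumption. Qed.


Section Spec.
Variables (C : Cat) (hC : is_cat C) (n : nat) (k : 'I_n -> nat)
  (th : PartialOp C 'I_n) (hth : is_partial_op th)
  (ths : forall j : 'I_n, PartialOp C 'I_(k j))
  (hths : forall j, is_partial_op (ths j))
  (hfac : factors th ths).

Definition outF (F : SumIdx k -> Copsh C) : 'I_n -> Copsh C :=
  fun j => day_obj (ths j) (@blk n k _ F j).


Definition f_alpha F a (t : day_carrier (comp_op hfac) F a) : day_carrier th (outF F) a :=
  @day_mk C 'I_n th (outF F) a (tuple_fo hfac (pD t))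
    (fun j => fo (pop (ths j)) (exist _ (@blk n k _ (proj1_sig (pD t)) j) (proj2_sig (pD t) j)))
    (pU t) (fun j => idm _)
    (fun j => qcls _ (@day_mk C _ (ths j) (@blk n k _ F j) _
        (exist _ (@blk n k _ (proj1_sig (pD t)) j) (proj2_sig (pD t) j))
        (@blk n k _ (pC t) j) (idm _)
        (fun l => pV t (existT _ j l)) (fun l => pY t (existT _ j l)))).

Definition alpha F a : day0 (comp_op hfac) F a -> dayR0 th ths F a :=
  qlift _ (@f_alpha F a).

Section G.
Variables (F : SumIdx k -> Copsh C) (a : ob C) (d : ob (ThDomCat th)) (e : 'I_n -> ob C)
  (u : hom (fo (pop th) d) a) (v : forall j, hom (e j) (proj1_sig d j))
  (r : forall j, day_carrier (ths j) (@blk n k _ F j) (e j)).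

Definition gx : SumIdx k -> ob C := fun s => proj1_sig (pD (r (projT1 s))) (projT2 s).
Definition ghx : prod_dom ths gx := fun j => proj2_sig (pD (r j)).
Definition gX : ob (ProdDomCat ths) := exist _ gx ghx.
Definition gc : SumIdx k -> ob C := fun s => pC (r (projT1 s)) (projT2 s).
Definition gv : forall s, hom (gc s) (gx s) := fun s => pV (r (projT1 s)) (projT2 s).
Definition gy : forall s, ps0 (F s) (gc s) :=
  fun s => match s as s0 return ps0 (F s0) (gc s0) with existT j l => pY (r j) l end.
Definition giota j : @hom (DomCat (ths j)) (exist _ (@blk n k _ gx j) (ghx j)) (pD (r j)) :=
  fun l => idm _.
Definition gw : @hom (ThDomCat th) (tuple_fo hfac gX) d :=
  fun j => cmp (v j) (cmp (pU (r j)) (fm (pop (ths j)) (@giota j))).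
Definition gmap : day_carrier (comp_op hfac) F a :=
  @day_mk C _ (comp_op hfac) F a gX gc (cmp u (fm (pop th) gw)) gv gy.
End G.

Lemma alpha_resp F a (t t' : day_carrier (comp_op hfac) F a) :
  @day_rel C _ (comp_op hfac) F a t t' ->
  crst _ (@day_rel C _ th (outF F) a) (f_alpha t) (f_alpha t').
Proof.
have [hl [hr ha]] := hC; have [hid hcmp] := hth.
case => [x x' g c u v y|x c c' h u v y].
- apply: Zg_crst.
  exists (tuple_fm hfac g); exists (tuple_fm hfac g).
  rewrite /pU /pV /pY /pD /pC /=; split; [|split].
  + done.
  + by move=> j; rewrite hl hr.
  + move=> j; rewrite /outF /= day1_cls //; apply: qcls_eq; apply: rst_sym; apply: rst_step.
    rewrite /postc /pU /pV /pY /pD /pC /= hr.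
    rewrite -[X in day_mk X _ _]hl.
    exact: day_rel_D.
- apply: Zg_crst.
  exists (@idm (ThDomCat th) _); exists (@idm (PowCat C 'I_n) _).
  rewrite /pU /pV /pY /pD /pC /=; split; [|split].
  + by rewrite hid hr.
  + by move=> j; rewrite ?hl ?hr.
  + move=> j; rewrite /outF /= day1_cls //; apply: qcls_eq; apply: rst_sym; apply: rst_step.
    rewrite /postc /pU /pV /pY /pD /pC /= hl.
    exact: day_rel_C.
Qed.

Lemma alpha_cls F a (t : day_carrier (comp_op hfac) F a) :
  alpha (qcls _ t) = qcls _ (f_alpha t).
Proof. rewrite /alpha qlift_cls //; exact: alpha_resp. Qed.
Lemma dchoice2 (J : Type) (A : J -> Type) (B : forall j, A j -> Type)
  (Q : forall j (x : A j), B j x -> Prop) :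
  (forall j, exists x y, Q j x y) ->
  exists (f : forall j, A j) (g : forall j, B j (f j)), forall j, Q j (f j) (g j).
Proof.
move=> H.
exists (fun j => proj1_sig (constructive_indefinite_description _ (H j))).
exists (fun j => proj1_sig (constructive_indefinite_description _
          (proj2_sig (constructive_indefinite_description _ (H j))))).
move=> j.
exact: (proj2_sig (constructive_indefinite_description _
          (proj2_sig (constructive_indefinite_description _ (H j))))).
Qed.

Lemma gmap_Zg F a (d : ob (ThDomCat th)) e (u : hom (fo (pop th) d) a)
  (v : forall j, hom (e j) (proj1_sig d j))
  (r r' : forall j, day_carrier (ths j) (@blk n k _ F j) (e j)) :
  (forall j, Zg (r j) (r' j)) -> Zg (gmap u v r) (gmap u v r').
Proof.
have [hl [hr ha]] := hC; have [hid hcmp] := hth.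
move=> H; rewrite /Zg in H.
have [G [Hh HQ]] := dchoice2 H.
exists (fun s => G (projT1 s) (projT2 s)); exists (fun s => Hh (projT1 s) (projT2 s)).
rewrite /gmap /pU /pV /pY /pD /pC /=; split; [|split].
- rewrite -ha; change (fm (pop (comp_op hfac)) ?g) with (fm (pop th) (tuple_fm hfac g)).
  rewrite -hcmp; congr (cmp u (fm _ _)).
  apply: functional_extensionality_dep => j /=.
  have [Hu [Hv Hy]] := HQ j.
  have [hidj hcmpj] := hths j.
  rewrite /gw Hu -!ha -!hcmpj; congr (cmp (v j) (cmp _ (fm _ _))).
  apply: functional_extensionality_dep => l /=.
  by rewrite hl hr.
- move=> s; have [Hu [Hv Hy]] := HQ (projT1 s); exact: Hv.
- case=> j l /=; have [Hu [Hv Hy]] := HQ j; exact: Hy.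
Qed.
Lemma gmap_RI F (hF : forall s, is_copsh (F s)) a (d : ob (ThDomCat th)) e
  (u : hom (fo (pop th) d) a) (v : forall j, hom (e j) (proj1_sig d j))
  (r r' : forall j, day_carrier (ths j) (@blk n k _ F j) (e j)) :
  (forall j, crst _ (@day_rel C _ (ths j) (@blk n k _ F j) (e j)) (r j) (r' j)) ->
  crst _ (@day_rel C _ (comp_op hfac) F a) (gmap u v r) (gmap u v r').
Proof.
move=> H.
have hFj : forall j l, is_copsh (@blk n k _ F j l) := fun j l => hF _.
have Hp := fun j => crst_path hC (hths j) (hFj j) (H j).
have [PM HPM] := dchoice2 (B := fun _ _ => unit) (Q := fun j pm (_ : unit) =>
    pm.1 0 = r j /\ (forall i, pm.2 <= i -> pm.1 i = r' j) /\ (forall i, Zs (pm.1 i) (pm.1 i.+1)))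
   (fun j => let: ex_intro pm Hpm := Hp j in ex_intro _ pm (ex_intro _ tt Hpm)).
case: HPM => _ HPM.
pose M := \max_(j < n) (PM j).2.
have key : forall i, crst _ (@day_rel C _ (comp_op hfac) F a) (gmap u v r)
                         (gmap u v (fun j => (PM j).1 i)).
  elim => [|i IH].
  - have -> : (fun j => (PM j).1 0) = r.
      by apply: functional_extensionality_dep => j; case: (HPM j).
    exact: rst_refl.
  - have Hs : forall j, exists b : bool,
        if b then Zg ((PM j).1 i) ((PM j).1 i.+1) else Zg ((PM j).1 i.+1) ((PM j).1 i).
      move=> j; case: (HPM j) => _ [_ Hz]; case: (Hz i) => Hz'; [exists true|exists false]; exact Hz'.
    have [b [_ Hb]] := dchoice2 (B := fun _ _ => unit)
      (Q := fun j (bb : bool) (_ : unit) =>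
             if bb then Zg ((PM j).1 i) ((PM j).1 i.+1) else Zg ((PM j).1 i.+1) ((PM j).1 i))
      (fun j => let: ex_intro bb Hbb := Hs j in ex_intro _ bb (ex_intro _ tt Hbb)).
    pose mid := fun j => if b j then (PM j).1 i.+1 else (PM j).1 i.
    apply: (rst_trans _ _ _ _ _ IH).
    apply: (rst_trans _ _ _ (gmap u v mid)).
    + apply: Zg_crst; apply: gmap_Zg => j; rewrite /mid.
      move: (Hb j); case: (b j) => /= Hz; [exact: Hz|exact: (Zg_refl hC (hths j) (hFj j))].
    + apply: rst_sym; apply: Zg_crst; apply: gmap_Zg => j; rewrite /mid.
      move: (Hb j); case: (b j) => /= Hz; [exact: (Zg_refl hC (hths j) (hFj j))|exact: Hz].
have -> : r' = (fun j => (PM j).1 M).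
  apply: functional_extensionality_dep => j; case: (HPM j) => _ [HM _].
  rewrite HM // /M; exact: (@leq_bigmax _ (fun j => (PM j).2) j).
exact: key.
Qed.
Lemma crst_day_mk_u (I : Type) (P : PartialOp C I) F a d c
  (u1 u2 : hom (fo (pop P) d) a) v y :
  u1 = u2 -> crst _ (@day_rel C I P F a) (@day_mk C I P F a d c u1 v y) (day_mk u2 v y).
Proof. by move->; apply: rst_refl. Qed.

Definition G0 F a (o : day_carrier th (outF F) a) : day_carrier (comp_op hfac) F a :=
  gmap (pU o) (pV o) (fun j => qrep (pY o j)).

Definition beta F a (y : dayR0 th ths F a) : day0 (comp_op hfac) F a :=
  qcls _ (G0 (qrep y)).

Lemma G0_resp F (hF : forall s, is_copsh (F s)) a (o o' : day_carrier th (outF F) a) :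
  @day_rel C _ th (outF F) a o o' ->
  crst _ (@day_rel C _ (comp_op hfac) F a) (G0 o) (G0 o').
Proof.
have [hl [hr ha]] := hC; have [hid hcmp] := hth.
case => [d d' g e u v z|d e e' h u v z].
- rewrite /G0 /gmap /pU /pV /pY /pD /pC /=.
  apply: crst_day_mk_u.
  rewrite -ha -hcmp; congr (cmp u (fm _ _)).
  apply: functional_extensionality_dep => j /=.
  by rewrite /gw /= ha.
- apply: (rst_trans _ _ _ (gmap u v (fun j => postc (h j) (qrep (z j))))).
  + rewrite /G0 /pU /pV /pY /pD /pC /=; apply: gmap_RI => // j.
    rewrite /outF /= -{1}(qcls_qrep (z j)) day1_cls //.
    apply: rst_sym; exact: qrep_qcls.
  + rewrite /G0 /gmap /pU /pV /pY /pD /pC /=.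
    apply: crst_day_mk_u.
    congr (cmp u (fm _ _)).
    apply: functional_extensionality_dep => j /=.
    by rewrite /gw -!ha.
Qed.

Lemma G0_crst F (hF : forall s, is_copsh (F s)) a (o o' : day_carrier th (outF F) a) :
  crst _ (@day_rel C _ th (outF F) a) o o' ->
  crst _ (@day_rel C _ (comp_op hfac) F a) (G0 o) (G0 o').
Proof. apply: crst_map; exact: G0_resp. Qed.

Lemma beta_cls F (hF : forall s, is_copsh (F s)) a (o : day_carrier th (outF F) a) :
  beta (qcls _ o) = qcls _ (G0 o).
Proof.
rewrite /beta; apply: qcls_eq; apply: G0_crst => //; apply: rst_sym; exact: qrep_qcls.
Qed.
Lemma beta_alpha F (hF : forall s, is_copsh (F s)) a (x : day0 (comp_op hfac) F a) :
  beta (alpha x) = x.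
Proof.
have [hl [hr ha]] := hC; have [hid hcmp] := hth.
rewrite -(qcls_qrep x) alpha_cls beta_cls //.
apply: qcls_eq; move: (qrep x) => t.
apply: (rst_trans _ _ _ (gmap (pU (f_alpha t)) (pV (f_alpha t))
   (fun j => @day_mk C _ (ths j) (@blk n k _ F j) _
        (exist _ (@blk n k _ (proj1_sig (pD t)) j) (proj2_sig (pD t) j))
        (@blk n k _ (pC t) j) (idm _)
        (fun l => pV t (existT _ j l)) (fun l => pY t (existT _ j l))))).
  rewrite /G0; apply: gmap_RI => // j; apply: rst_sym; exact: qrep_qcls.
case: t => [[x0 hx0] [c [[u v] y]]].
rewrite /gmap.
unshelve eapply zig_mk.
- move=> [j l] /=; exact: (idm (x0 (existT _ j l))).
- move=> [j l] /=; exact: (idm (c (existT _ j l))).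
- change (fm (pop (comp_op hfac)) ?g) with (fm (pop th) (tuple_fm hfac g)).
  Time apply: (@f_equal _ _ (fun w => cmp u (fm (pop th) w))).
  Time apply: functional_extensionality_dep => j.
  rewrite /gw.
  Time apply: eq_trans (hl _ _ _) _.
  Time apply: eq_trans (hl _ _ _) _.
  Time reflexivity.
- move=> [j l] /=; rewrite hl hr; reflexivity.
- move=> [j l] /=; rewrite (proj1 (hF _)); reflexivity.
Qed.
Lemma alpha_beta F (hF : forall s, is_copsh (F s)) a (y : dayR0 th ths F a) :
  alpha (beta y) = y.
Proof.
have [hl [hr ha]] := hC; have [hid hcmp] := hth.
rewrite -(qcls_qrep y) beta_cls // alpha_cls.
apply: qcls_eq; move: (qrep y) => o.
case: o => [d [e [[u v] z]]].
rewrite /f_alpha.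
unshelve eapply zig_mk.
- exact: (gw v (fun j => qrep (z j))).
- move=> j; exact: (cmp (pU (qrep (z j))) (fm (pop (ths j)) (giota (fun j => qrep (z j)) (j:=j)))).
- reflexivity.
- move=> j; apply: eq_trans (hr _ _ _) _; reflexivity.
- move=> j.
  change (ps1 (outF F j) ?f ?q) with (day1 f q).
  apply: eq_trans _ (esym (day1_cls hC _ _)).
  rewrite -{1}(qcls_qrep (z j)).
  apply: qcls_eq; apply: rst_sym; apply: Zg_crst.
  exists (giota (fun j => qrep (z j)) (j:=j)).
  exists (@idm (PowCat C _) (pC (qrep (z j)))).
  split; [|split].
  + apply: eq_trans (hr _ _ _) _; reflexivity.
  + move=> l; apply: eq_trans (hl _ _ _) _; apply: eq_trans _ (esym (hr _ _ _)); reflexivity.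
  + move=> l; apply: eq_trans _ (esym (proj1 (hF _) _ _)); reflexivity.
Qed.

Lemma alpha_nat_a F a b (f : hom a b) (x : day0 (comp_op hfac) F a) :
  alpha (day1 f x) = @dayR1 C n k th ths F a b f (alpha x).
Proof.
rewrite -(qcls_qrep x) day1_cls // !alpha_cls /dayR1 day1_cls //.
Qed.

Lemma outer_nat F G (eta : forall s a, ps0 (F s) a -> ps0 (G s) a)
  (Heta : forall s, is_nat (eta s)) j a b (f : hom a b)
  (q : day0 (ths j) (@blk n k _ F j) a) :
  day_map (fun l => eta (existT _ j l)) (day1 f q) =
  day1 f (day_map (fun l => eta (existT _ j l)) q).
Proof.
rewrite -(qcls_qrep q) day1_cls // day_map_cls; last by move=> l; exact: Heta.
rewrite day_map_cls; last by move=> l; exact: Heta.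
by rewrite day1_cls.
Qed.

Lemma day_mk_y (I : Type) (P : PartialOp C I) F a d c
  (u : hom (fo (pop P) d) a) v y1 y2 :
  y1 = y2 -> @day_mk C I P F a d c u v y1 = day_mk u v y2.
Proof. by move->. Qed.

Lemma alpha_nat_eta F G (eta : forall s a, ps0 (F s) a -> ps0 (G s) a)
  (Heta : forall s, is_nat (eta s)) a (x : day0 (comp_op hfac) F a) :
  alpha (day_map eta x) = @dayR_map C n k th ths F G eta a (alpha x).
Proof.
rewrite -(qcls_qrep x) day_map_cls // !alpha_cls /dayR_map day_map_cls;
  last by move=> j a0 b0 f q; exact: outer_nat.
congr (qcls _ _).
rewrite /f_alpha /mapc.
apply: day_mk_y; apply: functional_extensionality_dep => j.
apply: eq_trans _ (esym (day_map_cls _ _)); last by move=> l; exact: Heta.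
reflexivity.
Qed.

End Spec.

Theorem lemma3p7 (C : Cat) (hC : is_cat C) (n : nat) (k : 'I_n -> nat)
  (th : PartialOp C 'I_n) (hth : is_partial_op th)
  (ths : forall j : 'I_n, PartialOp C 'I_(k j))
  (hths : forall j, is_partial_op (ths j))
  (hfac : factors th ths) :
  exists (alpha : forall (F : SumIdx k -> Copsh C) (a : ob C),
                    day0 (comp_op hfac) F a -> dayR0 th ths F a)
         (beta  : forall (F : SumIdx k -> Copsh C) (a : ob C),
                    dayR0 th ths F a -> day0 (comp_op hfac) F a),
    (* componentwise bijections *)
    (forall F, (forall s, is_copsh (F s)) -> forall a,
        (forall x, beta F a (alpha F a x) = x) /\
        (forall y, alpha F a (beta F a y) = y)) /\
    (* natural in a *)
    (forall F, (forall s, is_copsh (F s)) -> forall a b (f : hom a b) x,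
        alpha F b (@day1 C _ (comp_op hfac) F a b f x) =
          @dayR1 C n k th ths F a b f (alpha F a x)) /\
    (* natural in (F_1, ..., F_{k_1+...+k_n}) *)
    (forall F G, (forall s, is_copsh (F s)) -> (forall s, is_copsh (G s)) ->
     forall (eta : forall s a, ps0 (F s) a -> ps0 (G s) a),
       (forall s, is_nat (eta s)) ->
       forall a x,
         alpha G a (@day_map C _ (comp_op hfac) F G eta a x) =
           @dayR_map C n k th ths F G eta a (alpha F a x)).
Proof.
Proof.
exists (fun F a => @alpha C n k th ths hfac F a).
exists (fun F a => @beta C n k th ths hfac F a).
split; [|split].
- move=> F hF a; split.
  + move=> x; exact: (beta_alpha hC hth hths hF).
  + move=> y; exact: (alpha_beta hC hth hths hfac hF).
- move=> F hF a b f x; exact: (alpha_nat_a hC hth).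
- move=> F G hF hG eta Heta a x; exact: (alpha_nat_eta hC hth Heta).
Qed.
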